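(* Let $\Bbbk$ be a field of characteristic zero and $b\in\Bbbk$. Then $\mathcal P_b=\mathrm{span}\{v^{(b)}_n\mid n\in\mathbb N\}=\Bbbk[t+t^{-1}]\,t^{-b}dt^b$, and the $\mathcal O$-action in this basis is $$u_n\cdot v^{(b)}_m=-(bn+m)v^{(b)}_{n+m}+4(b(n-1)+m)v^{(b)}_{n+m-2}\qquad(n\ge1,\ m\ge0).$$ Equivalently, writing $s=t+t^{-1}$, for all polynomials $g,h\in\Bbbk[x]$, $$g(s)(t^2-1)\partial\cdot\big(h(s)\,t^{-b}dt^b\big)=\Big((g(s)h'(s)+b\,g'(s)h(s))(s^2-4)+b\,g(s)h(s)s\Big)t^{-b}dt^b.$$
   Context: $\mathcal W=\Bbbk[t,t^{-1}]\partial$ ($\partial=d/dt$) is the Witt algebra with $L_n=-t^{n+1}\partial$. The tensor density module $I(0,b)=t^{-b}\Bbbk[t,t^{-1}]dt^b$ has $\mathcal W$-action $f\partial\cdot(g\,dt^b)=(fg'+bf'g)dt^b$ and basis $I_n=-t^{n-b}dt^b$ ($n\in\mathbb Z$). $\mathcal O\subseteq\mathcal W$ is spanned by $L_n-L_{-n}$ ($n\ge1$); $\mathcal P_b=\mathrm{span}\{I_n+I_{-n}\mid n\ge0\}$, an $\mathcal O$-submodule of $I(0,b)$. Define $u_n=-(t+t^{-1})^{n-1}(t^2-1)\partial\in\mathcal O$ for $n\ge1$ and $v^{(b)}_n=-(t+t^{-1})^nt^{-b}dt^b$ for $n\ge0$. In the displayed formula, $g'$, $h'$ denote derivatives of the polynomials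 $g,h$ evaluated at $s$. *)

(* Defs.v *)
From HB Require Import structures.
From mathcomp Require Import all_boot all_order all_algebra.
From mathcomp Require Import fraction generic_quotient.
Set Implicit Arguments. Unset Strict Implicit. Unset Printing Implicit Defensive.
Import Order.TTheory GRing.Theory.
Local Open Scope ring_scope.

(* The Laurent polynomial ring k[t,t^{-1}] is realised inside the field of
   rational functions k(t) = {fraction {poly k}}, with t = 'X. *)
Section Witt.
Variable K : fieldType.

Notation RF := {fraction {poly K}}.

Definition tf (p : {poly K}) : RF := FracField.tofrac p.
Definition kc (c : K) : RF := tf c%:P.
Definition tvar : RF := tf 'X.

(* d/dt on rational functions: quotient rule on a representative n/d
   (the result does not depend on the representative). *)
Definition dt (x : RF) : RF :=
  let r := repr x in
  tf ((\n_r)^`() * \d_r - \n_r * (\d_r)^`()) / tf ((\d_r) ^+ 2).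

Definition laurent (x : RF) : Prop := exists (p : {poly K}) (N : nat), x = tf p / tvar ^+ N.

(* A vector field f\partial in W is encoded by f (a Laurent polynomial).
   An element g t^{-b} dt^b of I(0,b) is encoded by the Laurent polynomial g.
   The action f\partial . (G dt^b) = (f G' + b f' G) dt^b with G = g t^{-b}
   gives, since G' = (g' - b g t^{-1}) t^{-b}:
     f\partial . (g t^{-b} dt^b) = (f g' - b f g t^{-1} + b f' g) t^{-b} dt^b. *)
Definition act (b : K) (f g : RF) : RF :=
  f * dt g - kc b * f * g / tvar + kc b * dt f * g.

(* L_n = - t^{n+1} \partial ,  I_n = - t^{n-b} dt^b *)
Definition Lw (n : int) : RF := - tvar ^ (n + 1).
Definition Id (n : int) : RF := - tvar ^ n.

Definition sv : RF := tvar + tvar^-1.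

Definition uw (n : nat) : RF := - (sv ^+ n.-1 * (tvar ^+ 2 - 1)).
Definition vd (n : nat) : RF := - sv ^+ n.

Definition evs (h : {poly K}) : RF := (map_poly kc h).[sv].

Definition inspan (F : nat -> RF) (x : RF) : Prop :=
  exists (n : nat) (c : nat -> K), x = \sum_(i < n) kc (c i) * F i.

(* generators I_n + I_{-n} (n >= 0) of P_b *)
Definition Pgen (n : nat) : RF := Id n%:Z + Id (- n%:Z).

End Witt.

(* Main.v *)
Require Import Defs.
From HB Require Import structures.
From mathcomp Require Import all_boot all_order all_algebra.
From mathcomp Require Import fraction generic_quotient.
From mathcomp Require Import ring zify.
Open Scope quotient_scope.
Import GRing.Theory.
Local Open Scope ring_scope.

Section G.
Variable F : fieldType.
Lemma gAdd (A B C E : F) : B != 0 -> E != 0 -> A / B + C / E = (A * E + C * B) / (B * E).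
Proof. by move=> hB hE; field; rewrite hB hE. Qed.
Lemma gMul (A B C E : F) : B != 0 -> E != 0 -> A / B * (C / E) = (A * C) / (B * E).
Proof. by move=> hB hE; field; rewrite hB hE. Qed.
Lemma gdD (A B C E A1 B1 C1 E1 : F) : B != 0 -> E != 0 ->
  ((A1 * E + A * E1 + (C1 * B + C * B1)) * (B * E) -
   (A * E + C * B) * (B1 * E + B * E1)) /
  (B * E * (B * E)) =
  (A1 * B - A * B1) / (B * B) + (C1 * E - C * E1) / (E * E).
Proof. by move=> hB hE; field; rewrite hB hE. Qed.
Lemma gdM (A B C E A1 B1 C1 E1 : F) : B != 0 -> E != 0 ->
  ((A1 * C + A * C1) * (B * E) - A * C * (B1 * E + B * E1)) /
  (B * E * (B * E)) =
  (A1 * B - A * B1) / (B * B) * (C / E) +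
  A / B * ((C1 * E - C * E1) / (E * E)).
Proof. by move=> hB hE; field; rewrite hB hE. Qed.
Lemma gV (X D Y : F) : X != 0 -> 0 = D * X^-1 + X * Y -> Y = - D / X ^+ 2.
Proof.
move=> hX h.
have e : X * Y = - (D / X) by apply/eqP; rewrite -addr_eq0 addrC -h.
have -> : Y = (X * Y) / X by field; rewrite hX.
by rewrite e; field; rewrite hX.
Qed.
Lemma gX (X D : F) k : D * X ^+ k.+1 + X * (k.+1%:R * X ^+ k * D) = k.+2%:R * X ^+ k.+1 * D.
Proof. by rewrite exprS; ring. Qed.
Lemma g4 (T G G1 H H1 B : F) : T != 0 ->
  G * (T ^+ 2 - 1) * (H1 * (1 - T ^- 2)) - B * (G * (T ^+ 2 - 1)) * H / T +
  B * (G1 * (1 - T ^- 2) * (T ^+ 2 - 1) + G * (2 * T ^+ 1 * 1 - 0)) * H =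
  (G * H1 + B * G1 * H) * ((T + T^-1) * (T + T^-1) - 4) +
  B * G * H * (T + T^-1).
Proof. by move=> hT; field; rewrite hT. Qed.
Lemma gXd (X D P c : F) : X != 0 -> c * P * D = c * (P * X) * D / X.
Proof. by move=> hX; field; rewrite hX. Qed.
Lemma g3 (T P Q B : F) (n1 m : nat) : T != 0 -> T + T^-1 != 0 ->
 - (P * (T ^+ 2 - 1)) * - (m%:R * Q * (1 - T ^- 2) / (T + T^-1)) - B * - (P * (T ^+ 2 - 1)) * - Q / T
 + B * - (n1%:R * P * (1 - T ^- 2) / (T + T^-1) * (T ^+ 2 - 1) + P * (2 * T ^+ 1 * 1 - 0)) * - Q =
 - (B * n1.+1%:R + m%:R) * - (P * Q * (T + T^-1)) + 4 * (B * (n1.+1%:R - 1) + m%:R) * - (P * Q / (T + T^-1)).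
Proof.
move=> hT hS; have h2 : T * T + 1 != 0.
  by have := mulf_neq0 hT hS; rewrite mulrDr mulfV.
by field; rewrite hT h2.
Qed.
Lemma gP (T X : F) : T != 0 -> X != 0 ->
  - (T * (T * X) + (T * (T * X))^-1) = (T + T^-1) * - (T * X + (T * X)^-1) - - (X + X^-1).
Proof. by move=> hT hX; field; rewrite hT hX. Qed.
End G.

Section Aux.
Variable K : fieldType.
Local Notation RF := {fraction {poly K}}.

Lemma tf_is_zmod : zmod_morphism (@tf K).
Proof. by move=> p q; rewrite /tf rmorphB. Qed.
HB.instance Definition _ := GRing.isZmodMorphism.Build _ _ (@tf K) tf_is_zmod.
Lemma tf_is_mon : monoid_morphism (@tf K).
Proof. by split; rewrite /tf ?rmorph1 // => p q; rewrite rmorphM. Qed.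
HB.instance Definition _ := GRing.isMonoidMorphism.Build _ _ (@tf K) tf_is_mon.

Lemma kc_is_zmod : zmod_morphism (@kc K).
Proof. by move=> p q; rewrite /kc !rmorphB. Qed.
HB.instance Definition _ := GRing.isZmodMorphism.Build _ _ (@kc K) kc_is_zmod.
Lemma kc_is_mon : monoid_morphism (@kc K).
Proof. by split; rewrite /kc ?rmorph1 // => p q; rewrite !rmorphM. Qed.
HB.instance Definition _ := GRing.isMonoidMorphism.Build _ _ (@kc K) kc_is_mon.

Lemma tf_eq0 p : (tf p == 0 :> RF) = (p == 0).
Proof. by rewrite /tf tofrac_eq0. Qed.
Lemma tf_inj p q : tf p = tf q :> RF -> p = q.
Proof. by move=> /eqP; rewrite /tf tofrac_eq => /eqP. Qed.

Lemma tfE p : tf p = \pi_(RF) (Ratio p 1).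
Proof. by rewrite /tf; unlock FracField.tofrac. Qed.

Lemma frac_repr (x : RF) : x * tf (\d_(repr x)) = tf (\n_(repr x)).
Proof.
rewrite -[x in x * _]reprK; set r := repr x.
rewrite !tfE.
transitivity (\pi_(RF) (FracField.mulf r (Ratio (\d_r) 1))); first by rewrite FracField.pi_mul.
apply/eqmodP => /=.
rewrite /FracField.equivf /FracField.mulf /=.
rewrite [\n_(Ratio \d_r 1)]numer_Ratio ?oner_neq0 // [\d_(Ratio \d_r 1)]denom_Ratio ?oner_neq0 //.
have h1 : \d_r * 1 != 0 by rewrite mulr1; exact: denom_ratioP.
rewrite (numer_Ratio _ h1) (denom_Ratio _ h1).
rewrite numer_Ratio ?oner_neq0 // denom_Ratio ?oner_neq0 //.
apply/eqP; ring.
Qed.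

Lemma fracE (x : RF) : exists p q, q != 0 /\ x = tf p / tf q.
Proof.
have E := frac_repr x.
exists (\n_(repr x)), (\d_(repr x)); split; first exact: denom_ratioP.
by rewrite -E mulfK // tf_eq0; exact: denom_ratioP.
Qed.

Lemma dtE (p q : {poly K}) : q != 0 -> dt (tf p / tf q) = tf (p^`() * q - p * q^`()) / tf (q ^+ 2).
Proof.
move=> q0; rewrite /dt.
set x := tf p / tf q.
have := frac_repr x.
set n := \n_(repr x); set d := \d_(repr x) => E.
have d0 : d != 0 by exact: denom_ratioP.
have E1 : p * d = n * q.
  have hx : tf p = x * tf q by rewrite /x mulfVK // tf_eq0.
  by apply: tf_inj; rewrite !rmorphM /= hx -E mulrAC.
have E2 : p^`() * d + p * d^`() = n^`() * q + n * q^`().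
  by rewrite -!derivM E1.
apply/eqP; rewrite eqr_div ?tf_eq0 ?expf_neq0 //; apply/eqP; rewrite -!rmorphM; congr tf.
apply/eqP; rewrite -subr_eq0; apply/eqP.
transitivity (d * q * (n^`() * q + n * q^`() - (p^`() * d + p * d^`()))
               + (d^`() * q + d * q^`()) * (p * d - n * q)); first by
  move: (n^`()) (d^`()) (p^`()) (q^`()) => n1 d1 p1 q1; ring.
by rewrite E1 E2 !subrr !mulr0 addr0.
Qed.

Lemma tfN0 {p : {poly K}} : p != 0 -> tf p != 0 :> RF.
Proof. by rewrite tf_eq0. Qed.

Lemma dt_tf (p : {poly K}) : dt (tf p) = tf p^`().
Proof.
have -> : tf p = tf p / tf 1 by rewrite rmorph1 divr1.
rewrite dtE ?oner_neq0 // derivC mulr0 subr0 mulr1 expr1n rmorph1 !divr1 //=.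
Qed.

Lemma dtD (x y : RF) : dt (x + y) = dt x + dt y.
Proof.
have [a [b [b0 ->]]] := fracE x; have [c [e [e0 ->]]] := fracE y.
have hb := tfN0 b0; have he := tfN0 e0.
have -> : tf a / tf b + tf c / tf e = tf (a*e + c*b) / tf (b*e).
  Timeout 10 rewrite !rmorphD !rmorphM /=. Timeout 10 exact: (@gAdd RF _ _ _ _ hb he).
rewrite !dtE ?mulf_neq0 //.
rewrite !(derivD, derivM, rmorphD, rmorphM, rmorphB, rmorphN, rmorphXn) /=.
exact: (@gdD RF _ _ _ _ _ _ _ _ hb he).
Qed.

Lemma dtM (x y : RF) : dt (x * y) = dt x * y + x * dt y.
Proof.
have [a [b [b0 ->]]] := fracE x; have [c [e [e0 ->]]] := fracE y.
have hb := tfN0 b0; have he := tfN0 e0.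
have -> : tf a / tf b * (tf c / tf e) = tf (a*c) / tf (b*e).
  by rewrite !rmorphM /=; exact: (@gMul RF _ _ _ _ hb he).
rewrite !dtE ?mulf_neq0 // !(derivD, derivM, rmorphD, rmorphM, rmorphB, rmorphN, rmorphXn) /=.
exact: (@gdM RF _ _ _ _ _ _ _ _ hb he).
Qed.

Lemma dtC (c : K) : dt (kc c) = 0 :> RF.
Proof. by rewrite /kc dt_tf derivC rmorph0. Qed.
Lemma dt1 : dt 1 = 0 :> RF.
Proof. by rewrite -(rmorph1 (@kc K)) dtC. Qed.
Lemma dtt : dt (tvar K) = 1.
Proof. by rewrite /tvar dt_tf derivX rmorph1. Qed.
Lemma tvar_neq0 : tvar K != 0.
Proof. by rewrite /tvar tf_eq0 polyX_eq0. Qed.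
Lemma dtV (x : RF) : x != 0 -> dt x^-1 = - dt x / x ^+ 2.
Proof.
move=> hx; apply: (@gV RF) => //.
by rewrite -dtM mulfV // dt1.
Qed.
Lemma dtX (x : RF) k : dt (x ^+ k.+1) = k.+1%:R * x ^+ k * dt x.
Proof.
elim: k => [|k IH]; first by rewrite expr1 expr0 mulr1 mul1r.
rewrite exprS dtM IH; exact: (@gX RF).
Qed.
Lemma dtN (x : RF) : dt (- x) = - dt x.
Proof. by apply/eqP; rewrite -addr_eq0 -dtD addNr -(rmorph0 (@kc K)) dtC. Qed.
Lemma dtB (x y : RF) : dt (x - y) = dt x - dt y.
Proof. by rewrite dtD dtN. Qed.

Lemma dtsv : dt (sv K) = 1 - (tvar K ^+ 2)^-1.
Proof. by rewrite /sv dtD dtV ?tvar_neq0 // dtt mulN1r. Qed.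

Lemma evsD : {morph (@evs K) : p q / p + q}.
Proof. by move=> p q; rewrite /evs rmorphD hornerD. Qed.
Lemma evsM : {morph (@evs K) : p q / p * q}.
Proof. by move=> p q; rewrite /evs rmorphM hornerM. Qed.
Lemma evsN : {morph (@evs K) : p / - p}.
Proof. by move=> p; rewrite /evs rmorphN hornerN. Qed.
Lemma evsB : {morph (@evs K) : p q / p - q}.
Proof. by move=> p q; rewrite evsD evsN. Qed.
Lemma evsC (c : K) : evs c%:P = kc c.
Proof. by rewrite /evs map_polyC hornerC. Qed.
Lemma evsX : @evs K 'X = sv K.
Proof. by rewrite /evs map_polyX hornerX. Qed.
Lemma evsXn n : @evs K ('X ^+ n) = sv K ^+ n.
Proof. by rewrite /evs rmorphXn /= map_polyX hornerXn. Qed.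
Lemma evs0 : evs 0 = 0 :> RF.
Proof. by rewrite /evs rmorph0 horner0. Qed.

Lemma dtevs (h : {poly K}) : dt (evs h) = evs h^`() * dt (sv K).
Proof.
elim/poly_ind: h => [|p c IH]; first by rewrite deriv0 evs0 -(rmorph0 (@kc K)) dtC mul0r.
rewrite derivMXaddC !(evsD, evsM) evsC evsX dtD dtM dtC IH; ring.
Qed.
Lemma part4 (b : K) (g h : {poly K}) :
     act b (evs g * (tvar K ^+ 2 - 1)) (evs h) =
       evs ((g * h^`() + b%:P * g^`() * h) * ('X ^+ 2 - 4%:R%:P) + b%:P * g * h * 'X).
Proof.
rewrite /act !dtM dtB dtevs (dtX _ 1) dtt dt1 dtevs dtsv.
rewrite !(evsD, evsM, evsB, evsN, evsC, evsXn, evsX) rmorph_nat.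
rewrite /sv.
have hT := tvar_neq0.
move: (tvar K) hT (evs g) (evs g^`()) (evs h) (evs h^`()) (kc b) => T hT G G1 H H1 B.
exact: (@g4 RF).
Qed.
Lemma sv_neq0 : sv K != 0.
Proof.
have hT := tvar_neq0.
apply/negP => /eqP h.
have e : tvar K * sv K = tf ('X ^+ 2 + 1).
  by rewrite /sv mulrDr mulfV // rmorphD rmorphXn rmorph1 /tvar expr2.
move: e; rewrite h mulr0 => /esym /eqP; rewrite tf_eq0 => /eqP e.
have := congr1 (fun p : {poly K} => p`_2) e.
by rewrite coefD coefXn coef1 coef0 /= addr0 => /eqP; rewrite oner_eq0.
Qed.

Lemma dtXd (x : RF) k : x != 0 -> dt (x ^+ k) = k%:R * x ^+ k * dt x / x.
Proof.
move=> hx; case: k => [|k]; first by rewrite expr0 dt1 !mul0r.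
by rewrite dtX exprSr; apply: (@gXd RF).
Qed.

Lemma part3 (b : K) (n m : nat) : (1 <= n)%N ->
     act b (uw K n) (vd K m) =
       - kc (b * n%:R + m%:R) * vd K (n + m)
       + kc (4 * (b * (n%:R - 1) + m%:R)) * vd K (n + m - 2).
Proof.
case: n => [//|n1] _.
have hS := sv_neq0. have hT := tvar_neq0.
have E3 : kc (4 * (b * (n1.+1%:R - 1) + m%:R)) * vd K (n1.+1 + m - 2)
        = kc (4 * (b * (n1.+1%:R - 1) + m%:R)) * - (sv K ^+ n1 * sv K ^+ m / sv K).
  case hj: (n1 + m)%N => [|j].
    have [-> ->] : n1 = 0%N /\ m = 0%N by lia.
    by rewrite subrr mulr0 addr0 mulr0 rmorph0 !mul0r.
  have -> : (n1.+1 + m - 2 = j)%N by lia.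
  congr (_ * _); rewrite /vd; congr (- _); apply/esym.
  Timeout 10 rewrite -exprD.
  Timeout 10 rewrite hj exprSr.
  Timeout 10 exact: (mulfK hS).
have E4 : sv K ^+ (n1.+1 + m) = sv K ^+ n1 * sv K ^+ m * sv K by rewrite addSn exprSr exprD.
rewrite E3 /vd E4 /act /uw /=.
Timeout 20 rewrite !dtN.
Timeout 20 rewrite dtM.
Timeout 20 rewrite dtB.
Timeout 20 rewrite (dtX (tvar K) 1).
Timeout 20 rewrite dtt dt1.
Timeout 20 rewrite !(dtXd _ _ hS).
Timeout 20 rewrite dtsv.
rewrite !(rmorphM, rmorphD, rmorphB, rmorphN, rmorph_nat, rmorph1).
move: (sv K ^+ n1) (sv K ^+ m) => P Q.
rewrite /sv in hS *.
move: (tvar K) hT hS => T hT hS.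
exact: (@g3 RF T P Q (kc b) n1 m hT hS).
Qed.
Lemma inspan_ind (F : nat -> RF) (Q : RF -> Prop) : Q 0 ->
  (forall x y, Q x -> Q y -> Q (x + y)) -> (forall c x, Q x -> Q (kc c * x)) ->
  (forall i, Q (F i)) -> forall x, inspan F x -> Q x.
Proof.
move=> Q0 QD QZ QF x [n [c ->]]; elim: n => [|n IH]; first by rewrite big_ord0.
by rewrite big_ord_recr /=; apply: QD => //; apply: QZ.
Qed.

Lemma pad (F : nat -> RF) n N (c : nat -> K) : (n <= N)%N ->
  \sum_(i < n) kc (c i) * F i = \sum_(i < N) kc (if (i < n)%N then c i else 0) * F i.
Proof.
move=> hn; rewrite (big_ord_widen N (fun i => kc (c i) * F i) hn) big_mkcond /=.
by apply: eq_bigr => i _; case: ifP; rewrite ?rmorph0 ?mul0r.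
Qed.

Lemma inspan0 (F : nat -> RF) : inspan F 0.
Proof. by exists 0%N, (fun _ => 0); rewrite big_ord0. Qed.

Lemma inspanD (F : nat -> RF) x y : inspan F x -> inspan F y -> inspan F (x + y).
Proof.
move=> [n1 [a ->]] [n2 [c ->]].
exists (n1 + n2)%N, (fun i => (if (i < n1)%N then a i else 0) + (if (i < n2)%N then c i else 0)).
rewrite (@pad F n1 (n1 + n2) a (leq_addr n2 n1)) (@pad F n2 (n1 + n2) c (leq_addl n1 n2)) -big_split /=.
by apply: eq_bigr => i _; rewrite rmorphD mulrDl.
Qed.

Lemma inspanZ (F : nat -> RF) (c : K) x : inspan F x -> inspan F (kc c * x).
Proof.
move=> [n [a ->]]; exists n, (fun i => c * a i); rewrite mulr_sumr.
by apply: eq_bigr => i _; rewrite rmorphM mulrA.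
Qed.

Lemma inspanF (F : nat -> RF) i : inspan F (F i).
Proof.
exists i.+1, (fun j => ((j == i)%N)%:R); rewrite big_ord_recr /= big1 ?eqxx ?rmorph1 ?mul1r ?add0r //.
by move=> j _; rewrite /= (ltn_eqF (ltn_ord j)) rmorph0 mul0r.
Qed.

Lemma span_evs (G : nat -> RF) : inspan G 1 -> (forall i, inspan G (sv K * G i)) ->
  forall h, inspan G (evs h).
Proof.
move=> G1 GS.
have SM : forall x, inspan G x -> inspan G (sv K * x).
  apply: inspan_ind => //.
  - by rewrite mulr0; exact: inspan0.
  - by move=> x y hx hy; rewrite mulrDr; exact: inspanD.
  - by move=> c x hx; rewrite mulrCA; exact: inspanZ.
elim/poly_ind => [|p c IH]; first by rewrite evs0; exact: inspan0.
rewrite evsD evsM evsX evsC -[kc c]mulr1 mulrC.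
by apply: inspanD; [exact: SM | exact: inspanZ].
Qed.

Definition Ep (x : RF) := exists h, x = evs h.

Lemma span_E (G : nat -> RF) : (forall i, Ep (G i)) -> forall x, inspan G x -> Ep x.
Proof.
move=> GE; apply: inspan_ind => //.
- by exists 0; rewrite evs0.
- by move=> x y [h1 ->] [h2 ->]; exists (h1 + h2); rewrite evsD.
- by move=> c x [h ->]; exists (c%:P * h); rewrite evsM evsC.
Qed.

Lemma PgenE n : Pgen K n = - (tvar K ^+ n + (tvar K ^+ n)^-1).
Proof. by rewrite /Pgen /Id -invr_expz opprD. Qed.

Lemma Pgen_rec n : Pgen K n.+2 = sv K * Pgen K n.+1 - Pgen K n.
Proof.
rewrite !PgenE !exprS /sv.
have hT := tvar_neq0.
have hX : tvar K ^+ n != 0 by rewrite expf_neq0.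
move: (tvar K) (tvar K ^+ n) hT hX => T X hT hX.
exact: (@gP RF T X hT hX).
Qed.
Lemma E_Pgen i : Ep (Pgen K i).
Proof.
have H : forall n, Ep (Pgen K n) /\ Ep (Pgen K n.+1).
  elim => [|n [IH1 IH2]].
    split.
      by exists (- 2%:R%:P); rewrite PgenE expr0 invr1 evsN evsC rmorph_nat.
    by exists (- 'X); rewrite PgenE expr1 evsN evsX.
  split => //; rewrite Pgen_rec.
  case: IH1 => [h1 ->]; case: IH2 => [h2 ->].
  by exists ('X * h2 - h1); rewrite evsB evsM evsX.
by case: (H i).
Qed.

Lemma E_vd i : Ep (vd K i).
Proof. by exists (- 'X ^+ i); rewrite evsN evsXn. Qed.

Lemma span_Pgen (two : (2%:R : K) != 0) h : inspan (@Pgen K) (evs h).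
Proof.
apply: span_evs.
- have -> : 1 = kc (- (2%:R)^-1) * Pgen K 0.
    rewrite PgenE expr0 invr1 rmorphN mulNr -mulrN opprK -[1 + 1]/(2%:R).
    by rewrite -(rmorph_nat (@kc K)) -rmorphM mulVf // rmorph1.
  exact: inspanZ (inspanF _ _).
- case => [|k].
    have -> : sv K * Pgen K 0 = kc 2%:R * Pgen K 1.
      by rewrite !PgenE expr0 expr1 invr1 rmorph_nat /sv; ring.
    exact: inspanZ (inspanF _ _).
  have -> : sv K * Pgen K k.+1 = Pgen K k.+2 + Pgen K k by rewrite Pgen_rec subrK.
  exact: inspanD (inspanF _ _) (inspanF _ _).
Qed.

Lemma span_vd h : inspan (@vd K) (evs h).
Proof.
apply: span_evs.
- have -> : 1 = kc (- 1) * vd K 0 by rewrite /vd expr0 rmorphN rmorph1 mulrNN mulr1.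
  exact: inspanZ (inspanF _ _).
- move=> i; have -> : sv K * vd K i = vd K i.+1 by rewrite /vd exprS mulrN.
  exact: inspanF.
Qed.
End Aux.

Theorem theorem4p30 (K : fieldType) (charK0 : [pchar K] =i pred0) (b : K) :
  (forall x, inspan (@Pgen K) x <-> inspan (@vd K) x) /\
  (forall x, inspan (@vd K) x <-> exists h : {poly K}, x = evs h) /\
  (forall n m : nat, (1 <= n)%N ->
     act b (uw K n) (vd K m) =
       - kc (b * n%:R + m%:R) * vd K (n + m)
       + kc (4 * (b * (n%:R - 1) + m%:R)) * vd K (n + m - 2)) /\
  (forall g h : {poly K},
     act b (evs g * (tvar K ^+ 2 - 1)) (evs h) =
       evs ((g * h^`() + b%:P * g^`() * h) * ('X ^+ 2 - 4%:R%:P) + b%:P * g * h * 'X)).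
Proof.
have two : (2%:R : K) != 0.
  apply/negP => /eqP h2; have := charK0 2; rewrite !inE /=.
  by rewrite h2 eqxx.
split.
  move=> x; split.
    by move=> /(@span_E K _ (@E_Pgen K)) [h ->]; exact: span_vd.
  by move=> /(@span_E K _ (@E_vd K)) [h ->]; exact: span_Pgen.
split.
  move=> x; split; first exact: (@span_E K _ (@E_vd K)).
  by move=> [h ->]; exact: span_vd.
split; first exact: part3.
exact: part4.
Qed.
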